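(* Let $\mathcal D=(G,d,(D_\lambda)_{\lambda>0},\Gamma,V)$ be a homogeneous dilation datum whose underlying RAHOGRASP $(G,A)$ is $2$-step nilpotent and endowed with a canonical homogeneous structure. Then for every non-periodic primitive substitution datum $(\mathcal A,\lambda_0,S_0)$ over $\mathcal D$, the associated substitution system $\Omega(S)$ is strongly aperiodic, i.e. every $\omega\in\Omega(S)$ has trivial $\Gamma$-stabilizer.
   Context: Dilation datum $(G,d,(D_\lambda),\Gamma,V)$: $G$ connected lcsc group, $d$ left-invariant metric inducing the topology, $\lambda\mapsto D_\lambda$ homomorphism $(\mathbb R_{>0},\cdot)\to\mathrm{Aut}(G)$ with $d(D_\lambda g,D_\lambda h)=\lambda d(g,h)$; $\Gamma$ uniform lattice with $D_\lambda(\Gamma)\subset\Gamma$ for some $\lambda>1$; $V$ bounded Borel, containing an open identity neighbourhood, with $G=\bigsqcup_{\gamma\in\Gamma}\gamma V$. Substitution datum $(\mathcal A,\lambda_0,S_0)$: finite $\mathcal A$; $\lambda_0>1+r_+/r_-$ for some $0<r_-<r_+$ with $B(e,r_-)\subset V\subset B(e,r_+)$; $D:=D_{\lambda_0}$ with $D(\Gamma)\subset\Gamma$; $S_0:\mathcal A\to\mathcal A^{D(V)\cap\Gamma}$. Patches: elements of $\mathcal A^M$, $M\subset\Gamma$; $P_a$ has support $\{e\}$, value $a$; $(\gamma P)(x)=P(\gamma^{-1}x)$; $P|_M$ restriction to $\mathrm{supp}P\cap M$; $P\prec Q$ iff $P=\gamma(Q|_M)$ for some $\gamma,M$. Substitution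 map: $\mathrm{supp}S(P)=D(\mathrm{supp}(P)V)\cap\Gamma$, $S(P)(\gamma)=S_0(P(\eta))(D(\eta)^{-1}\gamma)$ for the unique $\eta\in\mathrm{supp}P$ with $\gamma\in D(\eta)(D(V)\cap\Gamma)$. $\Omega(S)$: all $\omega\in\mathcal A^\Gamma$ whose finite restrictions $P$ satisfy $P\prec S^n(P_a)$ for some $n,a$. Primitive: $\exists L$ with $P_a\prec S^L(P_b)$ for all $a,b$. Non-periodic: $S_0$ injective and $(\gamma^{-1}S(P_a))|_{\gamma^{-1}D(V)\cap D(V)}\ne S(P_b)|_{\gamma^{-1}D(V)\cap D(V)}$ for all $\gamma\in(D(V)\cap\Gamma)\setminus\{e\}$, $a,b$. RAHOGRASP, dilation family, homogeneous metric, adapted lattice, $\times_\beta$ and homogeneous dilation datum: $(G,A)$ with $G$ connected simply connected nilpotent Lie group, $A$ an $\mathbb R$-diagonalizable automorphism of $\mathfrak g$ with positive rational eigenvalues whose eigenspaces are defined over a rational form $\mathfrak g_{\mathbb Q}$; $D_\lambda=\exp\circ T_\lambda\circ\log$ with $T_\lambda=\lambda^\alpha$ on the $\alpha$-eigenspace; $\rho(A)$ the top eigenvalue; $d(g,h)=\|g^{-1}h\|$ for a homogeneous norm ($\|g\|=0\iff g=e$, $\|g^{-1}\|=\|g\|$, $\|D_\lambda g\|=\lambda\|g\|$, subadditive, continuous); $\Gamma$ generated by $\exp$ of a basis of $\mathfrak g_{\mathbb Q}$ of $A$-eigenvectors with integer structure constants divisible by all BCH denominators; the datum is homogeneous if additionally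 $G\cong G_H\times_\beta\mathbb R^m$ (product $(g,x)(h,y)=(gh,x+y+\beta(g,h))$, $\beta$ smooth normalized cocycle, $G_H\ne\{e\}$ with dilation family $D^H_\lambda$) with $D_\lambda(g_H,v)=(D^H_\lambda g_H,\lambda^{\rho(A)}v)$, $\Gamma=\Gamma_H\times_\beta\Gamma_0$, $V=V_H\times_\beta V_0$ ($V_H,V_0$ convenient fundamental domains for lattices $\Gamma_H<G_H,\Gamma_0<\mathbb R^m$), and $\bigcap_{x\in F_V}(x+F_V)\ne\emptyset$ for $F_V=\lambda_0^{\rho(A)}V_0\cap\Gamma_0$ whenever $\lambda_0>1$, $D_{\lambda_0}(\Gamma)\subset\Gamma$, $\lambda_0^{\rho(A)}>1$. Canonical homogeneous structure: for $G$ $2$-step nilpotent with rational form $\mathfrak g_{\mathbb Q}$, choose a $\mathbb Q$-complement $\mathfrak g_{1,\mathbb Q}$ of $[\mathfrak g_{\mathbb Q},\mathfrak g_{\mathbb Q}]$; $A$ acts by $1$ on $\mathfrak g_{1,\mathbb Q}\otimes\mathbb R$ and by $2$ on $[\mathfrak g,\mathfrak g]$. *)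

(* Defs.v *)
From HB Require Import structures.
From mathcomp Require Import all_boot all_order all_algebra.
From mathcomp Require Import all_classical all_reals all_analysis.
Set Implicit Arguments. Unset Strict Implicit. Unset Printing Implicit Defensive.
Import Order.TTheory GRing.Theory Num.Theory.
Import numFieldNormedType.Exports.
Local Open Scope classical_set_scope.
Local Open Scope ring_scope.

(* Simply connected nilpotent Lie groups of step <= 2, in exponential        *)
(* coordinates with respect to a fixed basis (e_i) of the Lie algebra:       *)
(* the Lie algebra is R^n with bracket [e_i,e_j] = sum_k c i j k e_k, and    *)
(* (BCH for step <= 2) the group law is x*y = x + y + 1/2 [x,y].            *)

Definition lbr {R : numFieldType} {n : nat} (c : 'I_n -> 'I_n -> 'I_n -> R)
  (x y : 'rV[R]_n) : 'rV[R]_n :=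
  \row_k \sum_(i < n) \sum_(j < n) x 0 i * y 0 j * c i j k.

Definition gmul {R : numFieldType} {n : nat} (c : 'I_n -> 'I_n -> 'I_n -> R)
  (x y : 'rV[R]_n) : 'rV[R]_n := x + y + 2^-1 *: lbr c x y.

Definition ginv {R : numFieldType} {n : nat} (x : 'rV[R]_n) : 'rV[R]_n := - x.

(* structure constants of a Lie algebra of nilpotency step <= 2:           *)
(* antisymmetry, and [[e_i,e_j],e_l] = 0 (Jacobi then holds trivially)      *)
Definition lie_step_le2 {K : pzRingType} {n : nat} (c : 'I_n -> 'I_n -> 'I_n -> K) :=
  (forall i j k, c i j k = - c j i k) /\
  (forall i j l p, \sum_(k < n) c i j k * c k l p = 0).

Definition cR {R : numFieldType} {n : nat} (c : 'I_n -> 'I_n -> 'I_n -> int) :=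
  fun i j k => (c i j k)%:~R : R.

(* ---- The RAHOGRASP (G,A): G 2-step nilpotent, canonical homogeneous     *)
(* structure, in exp-coordinates w.r.t. the basis (e_i) of g_Q generating    *)
(* the adapted lattice.  w i is the A-eigenvalue of e_i.                     *)
Definition canonical_2step_adapted {n : nat} (c : 'I_n -> 'I_n -> 'I_n -> int)
  (w : 'I_n -> nat) : Prop :=
  [/\ lie_step_le2 c,
      (exists i j k, c i j k != 0),
      (* integer structure constants divisible by all BCH denominators (= 2) *)
      (forall i j k, (2 %| c i j k)%Z),
      (* eigenvalues: 1 on g_1 = span{e_k | w k = 1}, 2 on [g,g]            *)
      (forall k, w k = 1%N \/ w k = 2%N) &
      (* [g,g] = span{e_k | w k = 2} (g_1,Q is then a Q-complement) *)
      ((forall i j k, c i j k != 0 -> w k = 2%N) /\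
       (forall k, w k = 2%N -> exists a : 'I_n -> 'I_n -> rat,
          forall l, \sum_(i < n) \sum_(j < n) a i j * (c i j l)%:~R = (k == l)%:R))].

Definition rhoA {n : nat} (w : 'I_n -> nat) : nat := \max_(i < n) w i.

(* dilation family D_lambda = exp o T_lambda o log *)
Definition dil {R : realType} {n : nat} (w : 'I_n -> nat) (l : R) (x : 'rV[R]_n)
  : 'rV[R]_n := \row_i (l ^+ w i * x 0 i).

Definition qdil {R : realType} {n : nat} (w : 'I_n -> rat) (l : R) (x : 'rV[R]_n)
  : 'rV[R]_n := \row_i (l `^ (ratr (w i)) * x 0 i).

Definition gen_subgroup {T : Type} (mul : T -> T -> T) (inv : T -> T) (e : T)
  (S : set T) : set T :=
  fun g => forall P : set T, S `<=` P -> P e ->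
    (forall x y, P x -> P y -> P (mul x y)) -> (forall x, P x -> P (inv x)) -> P g.

Definition is_subgroup {T : Type} (mul : T -> T -> T) (inv : T -> T) (e : T)
  (H : set T) : Prop :=
  [/\ H e, (forall x y, H x -> H y -> H (mul x y)) & (forall x, H x -> H (inv x))].

(* the adapted lattice: generated by exp(e_i) *)
Definition Gam {R : realType} {n : nat} (c : 'I_n -> 'I_n -> 'I_n -> int)
  : set 'rV[R]_n :=
  gen_subgroup (gmul (cR c)) ginv 0 [set delta_mx 0 i | i in [set: 'I_n]].

Definition homog_norm {R : realType} {n : nat} (c : 'I_n -> 'I_n -> 'I_n -> int)
  (w : 'I_n -> nat) (N : 'rV[R]_n -> R) : Prop :=
  [/\ (forall x, N x = 0 <-> x = 0),
      (forall x, N (ginv x) = N x),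
      (forall l x, 0 < l -> N (dil w l x) = l * N x),
      (forall x y, N (gmul (cR c) x y) <= N x + N y) &
      continuous N].

Definition hdist {R : realType} {n : nat} (c : 'I_n -> 'I_n -> 'I_n -> int)
  (N : 'rV[R]_n -> R) (g h : 'rV[R]_n) : R := N (gmul (cR c) (ginv g) h).

Definition hball {R : realType} {n : nat} (c : 'I_n -> 'I_n -> 'I_n -> int)
  (N : 'rV[R]_n -> R) (r : R) : set 'rV[R]_n := [set g | hdist c N 0 g < r].

Definition datum_domain {R : realType} {n : nat} (c : 'I_n -> 'I_n -> 'I_n -> int)
  (N : 'rV[R]_n -> R) (V : set 'rV[R]_n) : Prop :=
  [/\ (exists r : R, V `<=` hball c N r),
      <<s open >> V,
      (exists U : set 'rV[R]_n, open U /\ U 0 /\ U `<=` V) &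
      (forall g, exists! gam, Gam c gam /\ V (gmul (cR c) (ginv gam) g))].

Definition is_lattice {R : realType} {T : normedModType R}
  (mul : T -> T -> T) (inv : T -> T) (e : T) (L : set T) : Prop :=
  [/\ is_subgroup mul inv e L,
      (exists U : set T, open U /\ U e /\ U `&` L `<=` [set e]) &
      (exists K : set T, compact K /\ forall g, exists2 gam, L gam & K (mul (inv gam) g))].

Definition convenient_fd {R : realType} {T : normedModType R}
  (mul : T -> T -> T) (inv : T -> T) (e : T) (L : set T) (W : set T) : Prop :=
  [/\ bounded_set W,
      <<s open >> W,
      (exists U : set T, open U /\ U e /\ U `<=` W) &
      (forall g, exists! gam, L gam /\ W (mul (inv gam) g))].

Fixpoint iterD {R : realType} {U W : normedModType R} (vs : seq U) (f : U -> W)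
  : U -> W :=
  match vs with
  | [::] => f
  | v :: vs' => 'D_v (iterD vs' f)
  end.

Definition smooth {R : realType} {U W : normedModType R} (f : U -> W) : Prop :=
  forall vs : seq U, continuous (iterD vs f) /\
    forall x v, derivable (iterD vs f) x v.

Definition bmul {R : realType} {k m : nat} (mulH : 'rV[R]_k -> 'rV[R]_k -> 'rV[R]_k)
  (beta : 'rV[R]_k -> 'rV[R]_k -> 'rV[R]_m) (p q : 'rV[R]_k * 'rV[R]_m)
  : 'rV[R]_k * 'rV[R]_m := (mulH p.1 q.1, p.2 + q.2 + beta p.1 q.1).

Definition homogeneous_datum {R : realType} {n : nat}
  (c : 'I_n -> 'I_n -> 'I_n -> int) (w : 'I_n -> nat) (V : set 'rV[R]_n) : Prop :=
  exists (k m : nat) (cH : 'I_k -> 'I_k -> 'I_k -> rat) (wH : 'I_k -> rat)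
    (beta : 'rV[R]_k -> 'rV[R]_k -> 'rV[R]_m)
    (phi : 'rV[R]_n -> 'rV[R]_k * 'rV[R]_m) (psi : 'rV[R]_k * 'rV[R]_m -> 'rV[R]_n)
    (GH VH : set 'rV[R]_k) (G0 V0 : set 'rV[R]_m),
  let mulH := gmul (fun i j l => ratr (cH i j l) : R) in
  [/\
   (* G_H <> {e}, a RAHOGRASP (step <= 2, rational structure constants in a   *)
   (* rational A_H-eigenbasis, positive rational eigenvalues wH)             *)
   [/\ (0 < k)%N, lie_step_le2 cH, (forall i, 0 < wH i) &
       (forall i j l, cH i j l != 0 -> wH l = wH i + wH j)],
   [/\ (forall g, beta 0 g = 0 /\ beta g 0 = 0),
       (forall g h q, beta g h + beta (mulH g h) q = beta h q + beta g (mulH h q)) &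
       smooth (fun z : 'rV[R]_(k + k) => beta (lsubmx z) (rsubmx z))],
   [/\ cancel phi psi, cancel psi phi, continuous phi, continuous psi &
       (forall x y, phi (gmul (cR c) x y) = bmul mulH beta (phi x) (phi y))],
   [/\ (forall (l : R) x, 0 < l ->
          phi (dil w l x) = (qdil wH l (phi x).1, l ^+ rhoA w *: (phi x).2)),
       (forall x, Gam c x <-> (GH (phi x).1 /\ G0 (phi x).2)) &
       (forall x, V x <-> (VH (phi x).1 /\ V0 (phi x).2))] /\
   [/\ is_lattice mulH ginv 0 GH, is_lattice +%R -%R 0 G0,
       convenient_fd mulH ginv 0 GH VH & convenient_fd +%R -%R 0 G0 V0] &
   (forall l : R, 1 < l -> (forall g, Gam c g -> Gam c (dil w l g)) ->
      1 < l ^+ rhoA w ->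
      let FV := [set v | G0 v /\ exists2 u, V0 u & v = l ^+ rhoA w *: u] in
      exists y, forall x, FV x -> FV (y - x))].

(* A patchT (element of A^M, M a subset of Gamma) is a partial function; its  *)
(* support is the set of points where it is defined.                         *)
Definition patchT (R : realType) (n : nat) (A : Type) := 'rV[R]_n -> option A.

Definition Pa {R : realType} {n : nat} {A : Type} (a : A) : patchT R n A :=
  fun x => if x == 0 then Some a else None.

Definition ptrans {R : realType} {n : nat} {A : Type}
  (c : 'I_n -> 'I_n -> 'I_n -> int) (g : 'rV[R]_n) (P : patchT R n A) : patchT R n A :=
  fun x => P (gmul (cR c) (ginv g) x).

Definition prestr {R : realType} {n : nat} {A : Type} (P : patchT R n A)
  (M : set 'rV[R]_n) : patchT R n A :=
  fun x => if `[< M x >] then P x else None.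

Definition pprec {R : realType} {n : nat} {A : Type}
  (c : 'I_n -> 'I_n -> 'I_n -> int) (P Q : patchT R n A) : Prop :=
  exists gam M, Gam c gam /\ P = ptrans c gam (prestr Q M).

Definition DV {R : realType} {n : nat} (w : 'I_n -> nat) (l0 : R)
  (V : set 'rV[R]_n) : set 'rV[R]_n := dil w l0 @` V.

Definition subst_datum {R : realType} {n : nat} {A : finType}
  (c : 'I_n -> 'I_n -> 'I_n -> int) (w : 'I_n -> nat) (N : 'rV[R]_n -> R)
  (V : set 'rV[R]_n) (l0 : R) (S0 : A -> patchT R n A) : Prop :=
  [/\ (exists rm rp : R, [/\ 0 < rm, rm < rp, hball c N rm `<=` V,
          V `<=` hball c N rp & 1 + rp / rm < l0]),
      (forall g, Gam c g -> Gam c (dil w l0 g)) &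
      (forall a y, S0 a y <> None <-> (Gam c y /\ DV w l0 V y))].

Definition subst {R : realType} {n : nat} {A : Type}
  (c : 'I_n -> 'I_n -> 'I_n -> int) (w : 'I_n -> nat) (V : set 'rV[R]_n) (l0 : R)
  (S0 : A -> patchT R n A) (P : patchT R n A) : patchT R n A :=
  fun x =>
    match pselect (exists eta, P eta <> None /\
         (Gam c (gmul (cR c) (ginv (dil w l0 eta)) x) /\
          DV w l0 V (gmul (cR c) (ginv (dil w l0 eta)) x))) with
    | left H => let eta := projT1 (cid H) in
        match P eta with
        | Some a => S0 a (gmul (cR c) (ginv (dil w l0 eta)) x)
        | None => None
        end
    | right _ => None
    end.

Definition Omega {R : realType} {n : nat} {A : Type}
  (c : 'I_n -> 'I_n -> 'I_n -> int) (w : 'I_n -> nat) (V : set 'rV[R]_n) (l0 : R)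
  (S0 : A -> patchT R n A) : set (patchT R n A) :=
  [set om | (forall x, om x <> None <-> Gam c x) /\
     forall M : set 'rV[R]_n, finite_set M ->
       exists (k : nat) (a : A),
         pprec c (prestr om M) (iter k (subst c w V l0 S0) (Pa a))].

Definition primitive {R : realType} {n : nat} {A : Type}
  (c : 'I_n -> 'I_n -> 'I_n -> int) (w : 'I_n -> nat) (V : set 'rV[R]_n) (l0 : R)
  (S0 : A -> patchT R n A) : Prop :=
  exists L : nat, forall a b : A,
    pprec c (Pa a) (iter L (subst c w V l0 S0) (Pa b)).

Definition non_periodic {R : realType} {n : nat} {A : Type}
  (c : 'I_n -> 'I_n -> 'I_n -> int) (w : 'I_n -> nat) (V : set 'rV[R]_n) (l0 : R)
  (S0 : A -> patchT R n A) : Prop :=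
  injective S0 /\
  forall g, Gam c g -> DV w l0 V g -> g <> 0 -> forall a b : A,
    let W := [set x | DV w l0 V (gmul (cR c) g x) /\ DV w l0 V x] in
    prestr (ptrans c (ginv g) (subst c w V l0 S0 (Pa a))) W
      <> prestr (subst c w V l0 S0 (Pa b)) W.

Definition strongly_aperiodic {R : realType} {n : nat} {A : Type}
  (c : 'I_n -> 'I_n -> 'I_n -> int) (X : set (patchT R n A)) : Prop :=
  forall om, X om -> forall g, Gam c g -> ptrans c g om = om -> g = 0.

(* Main.v *)
Require Import Defs.
From HB Require Import structures.
From mathcomp Require Import all_boot all_order all_algebra.
From mathcomp Require Import all_classical all_reals all_analysis.
From mathcomp Require Import ring lra.
Set Implicit Arguments. Unset Strict Implicit. Unset Printing Implicit Defensive.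
Import Order.TTheory GRing.Theory Num.Theory.
Import numFieldNormedType.Exports.
Local Open Scope classical_set_scope.
Local Open Scope ring_scope.


Section Alg.
Variables (R : realType) (n : nat) (c : 'I_n -> 'I_n -> 'I_n -> int).
Hypothesis hc : lie_step_le2 c.

Local Notation G := 'rV[R]_n.
Local Notation br := (lbr (cR c)).
Local Notation mul := (gmul (cR c)).

Lemma cR_anti i j k : cR c i j k = - cR c j i k :> R.
Proof. by rewrite /cR hc.1 mulrNz. Qed.

Lemma cR_step i j l p : \sum_(k < n) cR c i j k * cR c k l p = 0 :> R.
Proof.
transitivity ((\sum_(k < n) c i j k * c k l p)%:~R : R); last by rewrite hc.2.
rewrite rmorph_sum; apply: eq_bigr => k _; by rewrite /cR rmorphM.
Qed.

Lemma brE (x y : G) k : br x y 0 k = \sum_(i < n) \sum_(j < n) x 0 i * y 0 j * cR c i j k.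
Proof. by rewrite /lbr mxE. Qed.

Lemma br_addl (x y z : G) : br (x + y) z = br x z + br y z.
Proof.
apply/rowP => k; rewrite !mxE -big_split /=; apply: eq_bigr => i _.
rewrite -big_split /=; apply: eq_bigr => j _; rewrite !mxE; ring.
Qed.

Lemma br_addr (x y z : G) : br x (y + z) = br x y + br x z.
Proof.
apply/rowP => k; rewrite !mxE -big_split /=; apply: eq_bigr => i _.
rewrite -big_split /=; apply: eq_bigr => j _; rewrite !mxE; ring.
Qed.

Lemma br_scalel a (x y : G) : br (a *: x) y = a *: br x y.
Proof.
apply/rowP => k; rewrite !mxE mulr_sumr; apply: eq_bigr => i _.
rewrite mulr_sumr; apply: eq_bigr => j _; rewrite !mxE; ring.
Qed.

Lemma br_scaler a (x y : G) : br x (a *: y) = a *: br x y.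
Proof.
apply/rowP => k; rewrite !mxE mulr_sumr; apply: eq_bigr => i _.
rewrite mulr_sumr; apply: eq_bigr => j _; rewrite !mxE; ring.
Qed.

Lemma br_oppl (x y : G) : br (- x) y = - br x y.
Proof. by rewrite -scaleN1r br_scalel scaleN1r. Qed.

Lemma br_oppr (x y : G) : br x (- y) = - br x y.
Proof. by rewrite -scaleN1r br_scaler scaleN1r. Qed.

Lemma br0l (y : G) : br 0 y = 0.
Proof. apply/rowP => k; rewrite !mxE big1 // => i _; rewrite big1 // => j _; by rewrite !mxE !mul0r. Qed.

Lemma br0r (y : G) : br y 0 = 0.
Proof. apply/rowP => k; rewrite !mxE big1 // => i _; rewrite big1 // => j _; by rewrite !mxE mulr0 mul0r. Qed.

Lemma br_anti (x y : G) : br y x = - br x y.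
Proof.
apply/rowP => k; rewrite !mxE -sumrN exchange_big /=; apply: eq_bigr => i _.
rewrite -sumrN; apply: eq_bigr => j _; rewrite cR_anti; ring.
Qed.

Lemma br_xx (x : G) : br x x = 0.
Proof.
have h := br_anti x x.
have : (2 : R) *: br x x = 0 by rewrite scaler_nat mulr2n {1}h addNr.
by move/eqP; rewrite scaler_eq0 pnatr_eq0 /= => /eqP.
Qed.

Lemma br_brl (x y z : G) : br (br x y) z = 0.
Proof.
apply/rowP => p; rewrite !mxE exchange_big /= big1 // => m _.
have h : \sum_(l < n) br x y 0 l * cR c l m p = 0.
  under eq_bigr => l _ do rewrite brE mulr_suml.
  rewrite exchange_big /= big1 // => i _.
  under eq_bigr => l _ do rewrite mulr_suml.
  rewrite exchange_big /= big1 // => j _.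
  under eq_bigr => l _ do rewrite -(mulrA (x 0 i * y 0 j)).
  by rewrite -mulr_sumr cR_step mulr0.
rewrite (eq_bigr (fun l => z 0 m * (br x y 0 l * cR c l m p))); last by move=> l _; ring.
by rewrite -mulr_sumr h mulr0.
Qed.

Lemma br_brr (x y z : G) : br z (br x y) = 0.
Proof. by rewrite br_anti br_brl oppr0. Qed.

Lemma mulE (x y : G) : mul x y = x + y + 2^-1 *: br x y.
Proof. by []. Qed.

Lemma gmul0x (x : G) : mul 0 x = x.
Proof. by rewrite mulE br0l scaler0 add0r addr0. Qed.

Lemma gmulx0 (x : G) : mul x 0 = x.
Proof. by rewrite mulE br0r scaler0 addr0 addr0. Qed.

Lemma gmulVx (x : G) : mul (- x) x = 0.
Proof. by rewrite mulE br_oppl br_xx oppr0 scaler0 addr0 addNr. Qed.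

Lemma gmulxV (x : G) : mul x (- x) = 0.
Proof. by rewrite mulE br_oppr br_xx oppr0 scaler0 addr0 addrN. Qed.

Lemma gmulA (x y z : G) : mul (mul x y) z = mul x (mul y z).
Proof.
rewrite !mulE !br_addl !br_addr !br_scalel !br_scaler br_brl br_brr !scaler0.
apply/rowP => k; rewrite !mxE; ring.
Qed.

Lemma gmulKx (x y : G) : mul (- x) (mul x y) = y.
Proof. by rewrite -gmulA gmulVx gmul0x. Qed.

Lemma gmulKVx (x y : G) : mul x (mul (- x) y) = y.
Proof. by rewrite -gmulA gmulxV gmul0x. Qed.

Lemma gmulxK (x y : G) : mul (mul y x) (- x) = y.
Proof. by rewrite gmulA gmulxV gmulx0. Qed.

Lemma gmulxKV (x y : G) : mul (mul y (- x)) x = y.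
Proof. by rewrite gmulA gmulVx gmulx0. Qed.

Lemma ginvM (x y : G) : - mul x y = mul (- y) (- x).
Proof.
rewrite !mulE br_oppl br_oppr opprK (br_anti x y).
apply/rowP => k; rewrite !mxE; ring.
Qed.

Lemma gmul_injl (x y z : G) : mul x y = mul x z -> y = z.
Proof. by move=> h; rewrite -(gmulKx x y) h gmulKx. Qed.

Lemma gmul_injr (x y z : G) : mul y x = mul z x -> y = z.
Proof. by move=> h; rewrite -(gmulxK x y) h gmulxK. Qed.

End Alg.

Lemma canon_central n (c : 'I_n -> 'I_n -> 'I_n -> int) (w : 'I_n -> nat) :
  canonical_2step_adapted c w -> forall i j k, w i = 2%N -> c i j k = 0.
Proof.
case=> hc _ _ _ [_ hsp] i j k wi.
have [a ha] := hsp i wi.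
have : (c i j k)%:~R = 0 :> rat.
  transitivity (\sum_(l < n) (i == l)%:R * (c l j k)%:~R : rat).
    rewrite (bigD1 i) //= eqxx mul1r big1 ?addr0 // => l; rewrite eq_sym => /negPf ->; by rewrite mul0r.
  under eq_bigr => l _ do rewrite -ha mulr_suml.
  rewrite exchange_big /= big1 // => i' _.
  under eq_bigr => l _ do rewrite mulr_suml.
  rewrite exchange_big /= big1 // => j' _.
  under eq_bigr => l _ do rewrite -mulrA.
  rewrite -mulr_sumr.
  suff -> : \sum_(l < n) ((c i' j' l)%:~R * (c l j k)%:~R : rat) = 0 by rewrite mulr0.
  transitivity ((\sum_(l < n) c i' j' l * c l j k)%:~R : rat); last by rewrite hc.2.
  by rewrite rmorph_sum; apply: eq_bigr => l _; rewrite rmorphM.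
by move/eqP; rewrite intr_eq0 => /eqP.
Qed.

Lemma canon_w n (c : 'I_n -> 'I_n -> 'I_n -> int) (w : 'I_n -> nat) :
  canonical_2step_adapted c w -> forall i j k, c i j k != 0 ->
  [/\ w k = 2%N, w i = 1%N & w j = 1%N].
Proof.
move=> hcan i j k ck; have := hcan; case=> hc _ _ hw12 [h2 _].
split; first exact: h2 ck.
- case: (hw12 i) => // /(canon_central hcan j k) h; by rewrite h eqxx in ck.
- case: (hw12 j) => // /(canon_central hcan i k) h.
  by rewrite hc.1 h oppr0 eqxx in ck.
Qed.

Section Dil.
Variables (R : realType) (n : nat) (c : 'I_n -> 'I_n -> 'I_n -> int) (w : 'I_n -> nat).
Hypothesis hc : lie_step_le2 c.
Hypothesis hw : forall i j k, c i j k != 0 -> w k = (w i + w j)%N.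
Hypothesis hc2 : forall i j k, (2 %| c i j k)%Z.

Local Notation G := 'rV[R]_n.
Local Notation br := (lbr (cR c)).
Local Notation mul := (gmul (cR c)).
Local Notation D := (dil w).

Lemma dilE (l : R) (x : G) k : D l x 0 k = l ^+ w k * x 0 k.
Proof. by rewrite mxE. Qed.

Lemma dil_br (l : R) (x y : G) : D l (br x y) = br (D l x) (D l y).
Proof.
apply/rowP => k; rewrite !mxE mulr_sumr; apply: eq_bigr => i _.
rewrite mulr_sumr; apply: eq_bigr => j _; rewrite !mxE.
have [c0|cn0] := eqVneq (c i j k) 0.
  by rewrite /cR c0 !mulr0.
by rewrite (hw cn0) exprD; ring.
Qed.

Lemma dil_mul (l : R) (x y : G) : D l (mul x y) = mul (D l x) (D l y).
Proof.
rewrite !mulE -dil_br; apply/rowP => k; rewrite !mxE; ring.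
Qed.

Lemma dilN (l : R) (x : G) : D l (- x) = - D l x.
Proof. by apply/rowP => k; rewrite !mxE mulrN. Qed.

Lemma dil0 (l : R) : D l 0 = 0 :> G.
Proof. by apply/rowP => k; rewrite !mxE mulr0. Qed.

Lemma dil1 (x : G) : D 1 x = x.
Proof. by apply/rowP => k; rewrite !mxE expr1n mul1r. Qed.

Lemma dilM (l m : R) (x : G) : D l (D m x) = D (l * m) x.
Proof. by apply/rowP => k; rewrite !mxE exprMn mulrA. Qed.

Lemma dilK (l : R) (x : G) : l != 0 -> D l^-1 (D l x) = x.
Proof. by move=> l0; rewrite dilM mulVf // dil1. Qed.

Lemma dilKV (l : R) (x : G) : l != 0 -> D l (D l^-1 x) = x.
Proof. by move=> l0; rewrite dilM mulfV // dil1. Qed.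

Lemma dil_inj (l : R) (x y : G) : l != 0 -> D l x = D l y -> x = y.
Proof. by move=> l0 h; rewrite -(dilK x l0) h dilK. Qed.

Lemma gam0 : Gam c (0 : G).
Proof. by move=> P _ h0 _ _. Qed.

Lemma gamM (x y : G) : Gam c x -> Gam c y -> Gam c (mul x y).
Proof. move=> gx gy P hS h0 hM hV; exact: (hM x y (gx P hS h0 hM hV) (gy P hS h0 hM hV)). Qed.

Lemma gamV (x : G) : Gam c x -> Gam c (- x).
Proof. move=> gx P hS h0 hM hV; exact: (hV x (gx P hS h0 hM hV)). Qed.

Lemma gamVMg (x y : G) : Gam c x -> Gam c y -> Gam c (mul (- x) y).
Proof. by move=> gx gy; apply: gamM => //; apply: gamV. Qed.

Lemma gamMg_l (x y : G) : Gam c x -> Gam c (mul x y) -> Gam c y.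
Proof. by move=> gx gxy; rewrite -(gmulKx hc x y); apply: gamVMg. Qed.

Definition intv (x : G) := forall i, x 0 i \is a Num.int.

Lemma gam_int (x : G) : Gam c x -> intv x.
Proof.
move=> gx; apply: gx.
- move=> _ [i _ <-] j; rewrite mxE; case: (_ && _); [exact: rpred1 | exact: rpred0].
- by move=> i; rewrite mxE; exact: rpred0.
- move=> u v hu hv k; rewrite !mxE.
  rewrite rpredD ?rpredD ?hu ?hv //.
  rewrite mulr_sumr rpred_sum // => i _; rewrite mulr_sumr rpred_sum // => j _.
  rewrite /cR -(divzK (hc2 i j k)) intrM.
  have -> : 2^-1 * (u 0 i * v 0 j * ((c i j k %/ 2)%Z%:~R * 2%:~R)) =
     u 0 i * v 0 j * ((c i j k %/ 2)%Z)%:~R :> R.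
    rewrite (_ : 2%:~R = 2 :> R) //. by field.
  by rewrite rpredM ?intr_int // rpredM.
- by move=> u hu k; rewrite /ginv mxE rpredN.
Qed.

End Dil.

Lemma eps_lemma (R : realType) n (N : 'rV[R]_n -> R) :
  continuous N -> (forall x, N x = 0 -> x = 0) ->
  exists2 e, 0 < e & forall s, `|s| = 1 -> e <= `|N s|.
Proof.
move=> Nc N0.
set K := [set s : 'rV[R]_n | `|s| = 1].
have Kb : bounded_set K.
  exists 1; split => // M M1 x Kx; rewrite /= Kx; exact: ltW.
have Kc : closed K.
  rewrite (_ : K = Num.Def.normr @^-1` [set 1]) //.
  apply: (continuous_closedP _).1; [exact: norm_continuous| exact: closed_eq].
have Kk : compact K by exact: bounded_closed_compact.
have Ik : compact (N @` K).
  apply: continuous_compact => //; exact: continuous_subspaceT.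
have Icl : closed (N @` K) by apply: compact_closed => //; exact: Rhausdorff.
have /closed_openC Io := Icl.
have I0 : (~` (N @` K)) 0.
  move=> [s Ks Ns0]; have := N0 _ Ns0 => s0; move: Ks; rewrite /K /= s0 normr0.
  by move/eqP; rewrite eq_sym oner_eq0.
have := Io 0 I0.
move=> /nbhs_ballP [e /= e0 he].
exists e => // s Ks; rewrite leNgt; apply/negP => hlt.
apply: (he (N s)); last by exists s.
by rewrite /ball /= sub0r normrN.
Qed.

Lemma coord_bound (R : realType) n (w : 'I_n -> nat) (N : 'rV[R]_n -> R) (i00 : 'I_n) :
  (forall i, w i = 1%N \/ w i = 2%N) -> continuous N -> (forall x, N x = 0 -> x = 0) ->
  (forall l x, 0 < l -> N (dil w l x) = l * N x) -> (forall x, 0 <= N x) ->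
  forall r, exists K, forall x, N x < r -> forall i, `|x 0 i| <= K.
Proof.
move=> w12 Nc N0 Nd Np r.
have [e e0 he] := eps_lemma Nc N0.
exists (r / e + (r / e) ^+ 2) => x Nx i.
have r0 : 0 < r by apply: le_lt_trans (Np x) Nx.
have re0 : 0 < r / e by rewrite divr_gt0.
have [->|xn0] := eqVneq x 0.
  rewrite mxE normr0; apply: addr_ge0; [exact: ltW | exact: sqr_ge0].
pose rf j := if w j == 1%N then `|x 0 j| else Num.sqrt `|x 0 j|.
case: (@arg_maxP _ _ _ i00 xpredT rf isT) => i0 _ hi0.
set t := rf i0 in hi0.
have xj : forall j, `|x 0 j| <= t ^+ w j.
  move=> j; have := hi0 j isT; rewrite /rf /=.
  case: (w12 j) => -> /=; first by rewrite expr1.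
  move=> h; rewrite -(sqr_sqrtr (normr_ge0 (x 0 j))) expr2 expr2.
  by apply: ler_pM => //; exact: sqrtr_ge0.
have t0 : 0 <= t by rewrite /t /rf; case: ifP => _; [exact: normr_ge0 | exact: sqrtr_ge0].
have xi0 : `|x 0 i0| = t ^+ w i0.
  rewrite /t /rf; case: (w12 i0) => -> /=; first by rewrite expr1.
  by rewrite sqr_sqrtr.
have tpos : 0 < t.
  rewrite lt_def t0 andbT; apply/negP => /eqP t00; move/eqP: xn0; apply.
  apply/rowP => j; rewrite [RHS]mxE; apply/eqP; rewrite -normr_eq0 eq_le normr_ge0 andbT.
  by apply: le_trans (xj j) _; rewrite t00 expr0n; case: (w12 j) => ->.
set s := dil w t^-1 x.
have sj : forall j, `|s 0 j| = `|x 0 j| / t ^+ w j.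
  by move=> j; rewrite mxE normrM exprVn normrV ?unitfE ?expf_neq0 ?gt_eqF // ger0_norm ?exprn_ge0 // mulrC.
have s1 : `|s| = 1.
  rewrite /Num.Def.normr /= mx_normrE; apply/le_anti/andP; split.
    apply: bigmax_le => // -[a j] _ /=; rewrite (ord1 a) sj.
    by rewrite ler_pdivrMr ?exprn_gt0 // mul1r.
  have := le_bigmax 0 (fun ij : 'I_1 * 'I_n => `|s ij.1 ij.2|) (ord0, i0).
  by rewrite /= sj xi0 divff // expf_neq0 // gt_eqF.
have hx : x = dil w t s by rewrite /s dilM mulfV ?gt_eqF // dil1.
have Nxs : N x = t * N s by rewrite {1}hx Nd.
have Ns := he s s1; rewrite ger0_norm ?Np // in Ns.
have tle : t <= r / e.
  rewrite ler_pdivlMr //; apply: ltW; apply: le_lt_trans Nx.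
  by rewrite Nxs ler_pM2l.
apply: le_trans (xj i) _.
have t2 : t ^+ 2 <= (r / e) ^+ 2 by rewrite !expr2; apply: ler_pM.
case: (w12 i) => ->; rewrite ?expr1.
  by rewrite -[t]addr0 lerD // sqr_ge0.
by rewrite -[t ^+ 2]add0r lerD // ltW.
Qed.

Lemma finite_intball (R : realType) n (N : 'rV[R]_n -> R) (r K : R) :
  (forall x, N x < r -> forall i, `|x 0 i| <= K) ->
  finite_set [set x : 'rV[R]_n | (forall i, x 0 i \is a Num.int) /\ N x < r].
Proof.
move=> hK.
set B := Num.Def.archi_bound `|K|.
have KB : `|K| < B%:R by exact: archi_boundP.
pose f (phi : {ffun 'I_n -> 'I_(B + B).+1}) : 'rV[R]_n :=
  \row_i ((phi i)%:R - B%:R).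
apply: (@sub_finite_set _ _ (range f)); last exact: finite_image.
move=> x [xint Nx].
have hz : forall i, exists z : int, x 0 i = z%:~R by move=> i; apply/intrP.
pose z i := projT1 (cid (hz i)).
have zE i : x 0 i = (z i)%:~R by rewrite /z; case: (cid (hz i)).
have zb i : `|z i| < B%:Z.
  have h : `|(z i)%:~R : R| < B%:R.
    by rewrite -zE; apply: le_lt_trans (hK x Nx i) _; apply: le_lt_trans (ler_norm K) KB.
  by rewrite -intr_norm (_ : (B%:R : R) = (B%:Z)%:~R) // ltr_int in h.
have zb' i : (0 <= z i + B%:Z)%R /\ (absz (z i + B%:Z)%R < (B + B).+1)%N.
  move: (zb i); rewrite ltr_norml => /andP[h1 h2]; split.
    by rewrite -lerBlDr sub0r ltW.
  rewrite -ltz_nat gez0_abs; last by rewrite -lerBlDr sub0r ltW.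
  by rewrite -addnS PoszD ltr_leD // ltW // ltz_nat ltnS.
exists [ffun i => inord (absz (z i + B%:Z)%R)] => //.
apply/rowP => i; rewrite !mxE ffunE inordK; last by case: (zb' i).
rewrite zE natr_absz ger0_norm; last by case: (zb' i).
by rewrite intrD addrK.
Qed.

Section Subst.
Variables (R : realType) (n : nat) (c : 'I_n -> 'I_n -> 'I_n -> int) (w : 'I_n -> nat).
Hypothesis hc : lie_step_le2 c.
Hypothesis hw : forall i j k, c i j k != 0 -> w k = (w i + w j)%N.
Hypothesis hc2 : forall i j k, (2 %| c i j k)%Z.
Variables (N : 'rV[R]_n -> R) (V : set 'rV[R]_n) (A : finType) (l0 : R)
  (S0 : A -> 'rV[R]_n -> option A) (rm rp : R).
Hypothesis hN : homog_norm c w N.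
Hypothesis Vtile : forall g, exists! gam, Gam c gam /\ V (gmul (cR c) (ginv gam) g).
Hypothesis rm0 : 0 < rm.
Hypothesis rmp : rm < rp.
Hypothesis Vin : hball c N rm `<=` V.
Hypothesis Vout : V `<=` hball c N rp.
Hypothesis l0big : 1 + rp / rm < l0.
Hypothesis Dgam : forall g, Gam c g -> Gam c (dil w l0 g).
Hypothesis S0supp : forall a y, S0 a y <> None <-> (Gam c y /\ DV w l0 V y).
Hypothesis hw2 : forall i j k, c i j k != 0 -> [/\ w k = 2%N, w i = 1%N & w j = 1%N].
Hypothesis finM : forall r : R, finite_set [set x : 'rV[R]_n | Gam c x /\ N x < r].

Local Notation G := 'rV[R]_n.
Local Notation mul := (gmul (cR c)).
Local Notation D := (dil w l0).
Local Notation DVs := (DV w l0 V).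
Local Notation S := (subst c w V l0 S0).

Lemma N0 (x : G) : N x = 0 <-> x = 0.
Proof. by case: hN. Qed.
Lemma NN (x : G) : N (- x) = N x.
Proof. by case: hN => _ h _ _ _; exact: h. Qed.
Lemma Ndil (l : R) (x : G) : 0 < l -> N (dil w l x) = l * N x.
Proof. by case: hN => _ _ h _ _; exact: h. Qed.
Lemma Nsub (x y : G) : N (mul x y) <= N x + N y.
Proof. by case: hN => _ _ _ h _; exact: h. Qed.
Lemma Nz : N 0 = 0.
Proof. by apply/N0. Qed.
Lemma Nge0 (x : G) : 0 <= N x.
Proof.
have := Nsub x (- x); rewrite gmulxV // Nz NN => h.
have : 0 <= 2 * N x by lra.
by rewrite pmulr_rge0.
Qed.
Lemma Nsub3 (x y z : G) : N (mul x (mul y z)) <= N x + N y + N z.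
Proof. have := Nsub x (mul y z); have := Nsub y z; lra. Qed.

Lemma hballE r (x : G) : hball c N r x <-> N x < r.
Proof. by rewrite /hball /hdist /= /ginv oppr0 gmul0x. Qed.

Lemma l0gt2 : 2 < l0.
Proof.
have : 1 < rp / rm by rewrite ltr_pdivlMr // mul1r.
have := l0big; move: (rp / rm) => t; lra.
Qed.
Lemma l0gt0 : 0 < l0.
Proof. have := l0gt2; lra. Qed.
Lemma l0neq0 : l0 != 0.
Proof. by rewrite gt_eqF // l0gt0. Qed.
Lemma rp0 : 0 < rp.
Proof. have := rm0; have := rmp; lra. Qed.

Lemma V0 : V (0 : G).
Proof. by apply: Vin; rewrite hballE Nz. Qed.

Lemma DV0 : DVs 0.
Proof. by exists 0; [exact: V0 | rewrite dil0]. Qed.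

Lemma DVN (y : G) : DVs y -> N y < l0 * rp.
Proof.
case=> v /Vout; rewrite hballE => hv <-; rewrite Ndil ?l0gt0 //.
by rewrite ltr_pM2l // l0gt0.
Qed.

Lemma gamV0 (h : G) : Gam c h -> N h < rm -> h = 0.
Proof.
move=> gh hN'; have hV : V h by apply: Vin; rewrite hballE.
have [g0 [_ uq]] := Vtile h.
have a1 : Gam c h /\ V (mul (ginv h) h) by split => //; rewrite /ginv gmulVx //; exact: V0.
have a2 : Gam c (0 : G) /\ V (mul (ginv 0) h) by split; [exact: gam0 | rewrite /ginv oppr0 gmul0x].
by rewrite -(uq _ a1) (uq _ a2).
Qed.

Lemma Dtile_uniq (e1 e2 y1 y2 : G) : Gam c e1 -> Gam c e2 -> DVs y1 -> DVs y2 ->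
  mul (D e1) y1 = mul (D e2) y2 -> e1 = e2.
Proof.
move=> g1 g2 [v1 hv1 <-] [v2 hv2 <-]; rewrite -!dil_mul // => /dil_inj.
move=> /(_ l0neq0) he.
have [g0 [_ uq]] := Vtile (mul e1 v1).
have a1 : V (mul (ginv e1) (mul e1 v1)) by rewrite gmulKx.
have a2 : V (mul (ginv e2) (mul e1 v1)) by rewrite he gmulKx.
by rewrite -(uq _ (conj g1 a1)) (uq _ (conj g2 a2)).
Qed.

Lemma Dtile_ex (g : G) : exists e, Gam c e /\ DVs (mul (- D e) g).
Proof.
have [e [[ge hv] _]] := Vtile (dil w l0^-1 g).
exists e; split => //; exists (mul (ginv e) (dil w l0^-1 g)) => //.
by rewrite dil_mul // dilN // dilKV // l0neq0.
Qed.

Definition okP (P : 'rV[R]_n -> option A) := forall x, P x <> None -> Gam c x.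

Lemma S0None a (y : G) : ~ (Gam c y /\ DVs y) -> S0 a y = None.
Proof. by move=> h; case E: (S0 a y) => [v|] //; exfalso; apply: h; apply/(S0supp a); rewrite E. Qed.

Lemma S1 (P : 'rV[R]_n -> option A) (e : G) b (y : G) : okP P -> P e = Some b -> DVs y ->
  S P (mul (D e) y) = S0 b y.
Proof.
move=> oP Pe Dy; have ge : Gam c e by apply: oP; rewrite Pe.
rewrite /subst; case: pselect => [H|H].
- case: (cid H) => eta [Pn [gx dx]] /=.
  have geta : Gam c eta by apply: oP.
  have [gy|ngy] := pselect (Gam c y).
  + have ee : eta = e.
      apply: (Dtile_uniq geta ge dx Dy).
      by rewrite /ginv gmulKVx.
    by subst eta; rewrite Pe /ginv gmulKx.
  + exfalso; apply: ngy.
    apply: (gamMg_l hc (Dgam ge)); apply: (gamMg_l hc (gamV (Dgam geta))).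
    exact: gx.
- apply/esym/S0None => -[gy _]; apply: H; exists e; split; first by rewrite Pe.
  by rewrite /ginv gmulKx.
Qed.

Lemma S2 (P : 'rV[R]_n -> option A) (x : G) : S P x <> None ->
  exists e b y, [/\ P e = Some b, Gam c y, DVs y & x = mul (D e) y].
Proof.
rewrite /subst; case: pselect => // H; case: (cid H) => eta [Pn [gx dx]] /=.
case E: (P eta) => [b|] // _.
by exists eta, b, (mul (ginv (D eta)) x); split => //; rewrite /ginv gmulKVx.
Qed.

Lemma okS (P : 'rV[R]_n -> option A) : okP P -> okP (S P).
Proof.
move=> oP x /S2 [e [b [y [Pe gy _ ->]]]].
by apply: gamM => //; apply: Dgam; apply: oP; rewrite Pe.
Qed.

Lemma okPa a : okP (Pa a : 'rV[R]_n -> option A).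
Proof. by move=> x; rewrite /Pa; case: eqP => // -> _; exact: gam0. Qed.

Lemma okIter k a : okP (iter k S (Pa a)).
Proof. by elim: k => [|k ih] /=; [exact: okPa | exact: okS]. Qed.

Lemma Sidx (P : 'rV[R]_n -> option A) (z : G) : okP P -> Gam c z -> S P (D z) <> None -> P z <> None.
Proof.
move=> oP gz /S2 [e [b [y [Pe gy Dy he]]]].
have ge : Gam c e by apply: oP; rewrite Pe.
have ee : e = z by apply: (Dtile_uniq ge gz Dy DV0); rewrite -he gmulx0.
by rewrite -ee Pe.
Qed.

Lemma SPa a : S (Pa a) = S0 a.
Proof.
apply: funext => x; have [dx|ndx] := pselect (DVs x).
- have P0 : (Pa a : 'rV[R]_n -> option A) 0 = Some a by rewrite /Pa eqxx.
  by have := S1 (@okPa a) P0 dx; rewrite dil0 // gmul0x.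
- rewrite S0None; last by case.
  case E: (S (Pa a) x) => [v|] //; exfalso.
  have : S (Pa a) x <> None by rewrite E.
  move=> /S2 [e [b [y [Pe gy Dy he]]]].
  move: Pe; rewrite /Pa; case: eqP => // e0 _; apply: ndx.
  by rewrite he e0 dil0 // gmul0x.
Qed.

Hypothesis S0inj : injective S0.
Hypothesis nonper : forall g, Gam c g -> DVs g -> g <> 0 -> forall a b : A,
    let W := [set x | DVs (mul g x) /\ DVs x] in
    prestr (ptrans c (ginv g) (S (Pa a))) W <> prestr (S (Pa b)) W.

Definition Config (Q : G -> option A) (u d : G) (r : R) :=
  forall z, Gam c z -> N (mul (- u) z) < r -> Q z <> None /\ Q (mul d z) = Q z.

Lemma lrp0 : 0 < l0 * rp.
Proof. by rewrite mulr_gt0 // ?l0gt0 ?rp0. Qed.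

Lemma descent (P : G -> option A) (u d : G) (r : R) :
  okP P -> Gam c u -> Gam c d -> 3 * (l0 * rp) <= r -> Config (S P) u d r ->
  exists u' d', [/\ Gam c u', Gam c d', D d' = d, DVs (mul (- D u') u) &
                 Config P u' d' (r / l0 - 2 * rp)].
Proof.
move=> oP gu gd hr hconf.
have lrp := lrp0.
have [Qu Qdu] : S P u <> None /\ S P (mul d u) = S P u.
  by apply: hconf => //; rewrite gmulVx // Nz; lra.
have : S P (mul d u) <> None by rewrite Qdu.
move=> /S2 [e1 [b [y1 [P1 gy1 Dy1 hp]]]].
have g1 : Gam c e1 by apply: oP; rewrite P1.
have [e2 [g2 Dg]] := Dtile_ex (mul (- d) (D e1)).
set g := mul (- D e2) (mul (- d) (D e1)) in Dg.
have key : mul (- d) (D e1) = mul u (- y1).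
  have -> : D e1 = mul (mul d u) (- y1) by rewrite hp gmulxK.
  by rewrite gmulA // gmulKx.
have he2 : mul (D e2) g = mul u (- y1) by rewrite /g gmulKVx // key.
have De2 : D e2 = mul (mul u (- y1)) (- g) by rewrite -he2 gmulxK.
have Ny1 := DVN Dy1.
have Ng := DVN Dg.
have reg2 : forall y, DVs y -> N (mul (- u) (mul (D e2) y)) < 3 * (l0 * rp).
  move=> y Dy; rewrite De2 !gmulA // gmulKx //.
  have := Nsub3 (- y1) (- g) y; rewrite !NN; have := DVN Dy; lra.
have gg : Gam c g by apply: gamVMg => //; [exact: Dgam | apply: gamVMg => //; exact: Dgam].
have gDe2 : Gam c (D e2) by exact: Dgam.
have N0e2 : N (mul (- u) (D e2)) < r by have := reg2 0 DV0; rewrite gmulx0 //; lra.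
have [P2n _] := hconf (D e2) gDe2 N0e2.
have := Sidx oP g2 P2n; case P2: (P e2) => [c'|] // _.
have g0 : g = 0.
  apply: contrapT => gn0; have := @nonper g gg Dg gn0 c' b; rewrite /=; apply.
  rewrite !SPa; apply: funext => x; rewrite /prestr /ptrans.
  case: asboolP => // -[Wgx Wx]; rewrite /ginv opprK.
  have [gx|ngx] := pselect (Gam c x); last first.
    rewrite !S0None //; first by case.
    by case=> /(gamMg_l hc gg).
  have e1Q := S1 oP P2 Wgx.
  have e2Q := S1 oP P1 Wx.
  rewrite -e1Q -e2Q.
  have hz : mul (D e2) (mul g x) = mul (mul u (- y1)) x by rewrite -gmulA // he2.
  have gz : Gam c (mul (D e2) (mul g x)) by apply: gamM => //; apply: gamM.
  have Nz' : N (mul (- u) (mul (D e2) (mul g x))) < r.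
    rewrite hz gmulA // gmulKx //.
    have := Nsub (- y1) x; rewrite NN; have := DVN Wx; lra.
  have [_ <-] := hconf _ gz Nz'.
  congr (S P _); rewrite hz -key gmulA // gmulKVx //.
have eDe : D e2 = mul (- d) (D e1) by rewrite -(gmulx0 c (D e2)) -g0 /g gmulKVx.
have ed : d = D (mul e1 (- e2)).
  by rewrite dil_mul // dilN // eDe ginvM // opprK gmulKVx.
have [e0 [g0' D0]] := Dtile_ex u.
exists e0, (mul e1 (- e2)); split => //.
- by apply: gamM => //; apply: gamV.
move=> z gz hz.
have reg : forall y, DVs y -> N (mul (- u) (mul (D z) y)) < r.
  move=> y Dy.
  have -> : mul (- u) (mul (D z) y) =
      mul (mul (- u) (D e0)) (mul (D (mul (- e0) z)) y).
    by rewrite dil_mul // dilN // gmulA // -(gmulA hc (D e0)) gmulKVx.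
  apply: (le_lt_trans (Nsub3 _ _ _)).
  have h1 : N (mul (- u) (D e0)) < l0 * rp.
    by rewrite -NN ginvM // opprK; exact: DVN.
  have h2 : N (D (mul (- e0) z)) = l0 * N (mul (- e0) z) by rewrite Ndil // l0gt0.
  have h3 : l0 * N (mul (- e0) z) < r - 2 * (l0 * rp).
    have -> : r - 2 * (l0 * rp) = l0 * (r / l0 - 2 * rp) by field; exact: l0neq0.
    by rewrite ltr_pM2l // l0gt0.
  have := DVN Dy; lra.
have gDz : Gam c (D z) by exact: Dgam.
have NDz : N (mul (- u) (D z)) < r by have := reg 0 DV0; rewrite gmulx0.
have [QDz QdDz] := hconf (D z) gDz NDz.
have hdz : mul d (D z) = D (mul (mul e1 (- e2)) z) by rewrite dil_mul // -ed.
have gdz : Gam c (mul (mul e1 (- e2)) z) by apply: gamM => //; apply: gamM => //; apply: gamV.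
have Pz := Sidx oP gz QDz.
have Pdz : P (mul (mul e1 (- e2)) z) <> None.
  by apply: (Sidx oP gdz); rewrite -hdz QdDz.
split => //.
case E1: (P z) Pz => [a1|] // _; case E2: (P _) Pdz => [a2|] // _.
congr Some; apply: S0inj; apply: funext => y.
have [[gy Dy]|ny] := pselect (Gam c y /\ DVs y); last by rewrite !S0None.
rewrite -(S1 oP E1 Dy) -(S1 oP E2 Dy).
have gzy : Gam c (mul (D z) y) by apply: gamM.
have [_ <-] := hconf _ gzy (reg y Dy).
by rewrite dil_mul // -ed gmulA.
Qed.

Local Notation br := (lbr (cR c)).

Lemma conjE (h v : G) : mul (- v) (mul h v) = h + br h v.
Proof.
rewrite !mulE br_oppl !br_addr br_scaler br_brr // (br_anti hc v h) br_xx // scaler0.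
apply/rowP => k; rewrite !mxE; by field.
Qed.

Lemma br_w1 (h v : G) k : w k = 1%N -> br h v 0 k = 0.
Proof.
move=> wk; rewrite brE big1 // => i _; rewrite big1 // => j _.
have [c0|cn0] := eqVneq (c i j k) 0; first by rewrite /cR c0 mulr0.
by have [] := hw2 cn0; rewrite wk.
Qed.

Lemma br_central (h v : G) : (forall k, w k = 1%N -> h 0 k = 0) -> br h v = 0.
Proof.
move=> h0; apply/rowP => k; rewrite brE mxE big1 // => i _; rewrite big1 // => j _.
have [c0|cn0] := eqVneq (c i j k) 0; first by rewrite /cR c0 mulr0.
by have [_ wi _] := hw2 cn0; rewrite h0 // !mul0r.
Qed.

Definition Props (gam h : G) (i J1 : nat) (Bh : R) :=
  [/\ Gam c h, h <> 0, (forall k, w k = 1%N -> h 0 k * l0 ^+ i = gam 0 k), N h <= Bh &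
      ((J1 <= i)%N -> N h * l0 ^+ (i - J1) <= Bh)].

Lemma props_step (gam h h' v : G) i J1 Bh :
  (forall k, `|gam 0 k| < l0 ^+ J1) -> 2 * (l0 * rp) <= (l0 - 1) * Bh ->
  Props gam h i J1 Bh -> Gam c h' -> DVs (- v) -> D h' = mul (- v) (mul h v) ->
  Props gam h' i.+1 J1 Bh.
Proof.
move=> hJ1 hBh [gh hn0 hw1 hB hJ] gh' Dv hD.
have Nv : N v < l0 * rp by rewrite -NN; exact: DVN.
have l0p := l0gt0.
have hD' := hD; rewrite conjE in hD'.
have Nh' : l0 * N h' = N (mul (- v) (mul h v)) by rewrite -hD Ndil.
have Nh'B : l0 * N h' <= l0 * Bh.
  rewrite Nh'; apply: le_trans (Nsub3 _ _ _) _; rewrite NN.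
  have : l0 * Bh = Bh + (l0 - 1) * Bh by ring.
  move=> ->; lra.
have w1 : forall k, w k = 1%N -> l0 * h' 0 k = h 0 k.
  move=> k wk; have := congr1 (fun x : G => x 0 k) hD'.
  by rewrite dilE wk expr1 mxE br_w1 // addr0.
split => //.
- move=> h0; apply: hn0.
  have e1 : mul h v = v.
    by apply: (gmul_injl hc (x := - v)); rewrite -hD h0 dil0 gmulVx.
  by apply: (gmul_injr hc (x := v)); rewrite e1 gmul0x.
- move=> k wk; rewrite exprS mulrA (mulrC _ l0) w1 //; exact: hw1.
- by rewrite -(ler_pM2l l0p).
move=> hJi; have [eJ|ltJ] := eqVneq J1 i.+1.
  rewrite eJ subnn expr0 mulr1 -(ler_pM2l l0p) //.
have Ji : (J1 <= i)%N by rewrite -ltnS ltn_neqAle ltJ.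
have hz : forall k, w k = 1%N -> h 0 k = 0.
  move=> k wk; apply/eqP; apply/negP => /negP hk0.
  have i1 := norm_intr_ge1 (gam_int hc2 gh k) hk0.
  have := hJ1 k; rewrite -(hw1 k wk) normrM (ger0_norm (exprn_ge0 _ (ltW l0gt0))).
  apply/negP; rewrite -leNgt.
  have l01 : 1 < l0 by have := l0gt2; lra.
  apply: (le_trans (y := l0 ^+ i)); first by rewrite ler_eXn2l.
  by rewrite ler_peMl // exprn_ge0 // ltW // l0gt0.
have hc' := br_central v hz.
rewrite hc' addr0 in hD'.
rewrite subSn // exprS mulrA (mulrC (N h')) -Ndil // hD' //; exact: hJ.
Qed.

Fixpoint radf (m : nat) : R := if m is m'.+1 then l0 * (radf m' + 2 * rp) else 3 * (l0 * rp).

Lemma radf_ge m : 3 * (l0 * rp) <= radf m.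
Proof.
elim: m => [|m ih] /=; first by [].
have lrp := lrp0; have l01 : 1 <= l0 by have := l0gt2; lra.
have h1 : radf m <= l0 * radf m by rewrite ler_peMl //; lra.
have h2 : 0 <= l0 * (2 * rp) by apply: mulr_ge0; [lra | have := rp0; lra].
rewrite mulrDr; lra.
Qed.

Lemma radfS m : radf m.+1 / l0 - 2 * rp = radf m.
Proof. rewrite /=; field; exact: l0neq0. Qed.

Lemma iterate (gam : G) (a : A) (J1 T : nat) (Bh : R) :
  (forall k, `|gam 0 k| < l0 ^+ J1) -> 2 * (l0 * rp) <= (l0 - 1) * Bh ->
  forall kk u0 d0, Gam c u0 -> Gam c d0 -> Config (iter kk S (Pa a)) u0 d0 (radf T) ->
  Props gam (mul (- u0) (mul d0 u0)) 0 J1 Bh ->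
  forall i j, (j + i = kk)%N -> (i <= T)%N ->
  exists u d, [/\ Gam c u, Gam c d, Config (iter j S (Pa a)) u d (radf (T - i)) &
     Props gam (mul (- u) (mul d u)) i J1 Bh].
Proof.
move=> hJ1 hBh kk u0 d0 gu0 gd0 hc0 hp0.
elim=> [|i ih] j hji hiT.
  by move: hji; rewrite addn0 => ->; exists u0, d0; rewrite subn0.
have hji' : (j.+1 + i = kk)%N by rewrite addSnnS.
have [u [d [gu gd cf pr]]] := ih j.+1 hji' (ltnW hiT).
have eT : (T - i = (T - i.+1).+1)%N by rewrite subnSK.
rewrite eT in cf.
have [u' [d' [gu' gd' Dd' DVu cf']]] := descent (@okIter j a) gu gd (radf_ge _) cf.
rewrite radfS in cf'.
exists u', d'; split => //.
have gh' : Gam c (mul (- u') (mul d' u')) by apply: gamVMg => //; apply: gamM.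
apply: (props_step hJ1 hBh pr gh' (v := mul (- u) (D u'))).
  by rewrite ginvM // opprK.
rewrite dil_mul // dilN // dil_mul // Dd' ginvM // opprK.
by rewrite !gmulA // !gmulKVx.
Qed.

Lemma natr_le_pow m : (m%:R : R) <= l0 ^+ m.
Proof.
have l2 := l0gt2.
elim: m => [|m ih]; first by rewrite expr0.
have e1 : 1 <= l0 ^+ m by apply: exprn_ege1; lra.
rewrite exprS -natr1.
have : l0 ^+ m + l0 ^+ m <= l0 * l0 ^+ m.
  have -> : l0 * l0 ^+ m = 2 * l0 ^+ m + (l0 - 2) * l0 ^+ m by ring.
  have : 0 <= (l0 - 2) * l0 ^+ m by apply: mulr_ge0; lra.
  lra.
lra.
Qed.

Lemma strong (om : G -> option A) : Omega c w V l0 S0 om ->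
  forall g, Gam c g -> ptrans c g om = om -> g = 0.
Proof.
move=> [omsupp omfin] gam gg hper; apply: contrapT => gn0.
have lrp := lrp0; have l2 := l0gt2; have l0p := l0gt0.
set Bh := N gam + 2 * (l0 * rp).
set J1 := \big[maxn/0%N]_(k < n) Num.Def.archi_bound `|gam 0 k|.
set J2 := Num.Def.archi_bound (Bh / rm).
set T := (J1 + J2)%N.
have hJ1 : forall k, `|gam 0 k| < l0 ^+ J1.
  move=> k; apply: lt_le_trans (archi_boundP (normr_ge0 _)) _.
  apply: le_trans (natr_le_pow _).
  by rewrite ler_nat; apply: (@leq_bigmax _ (fun k => Num.Def.archi_bound `|gam 0 k|)).
have Ng0 := Nge0 gam.
have hBh : 2 * (l0 * rp) <= (l0 - 1) * Bh.
  have -> : (l0 - 1) * Bh = Bh + (l0 - 2) * Bh by ring.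
  have : 0 <= (l0 - 2) * Bh by apply: mulr_ge0; rewrite /Bh; lra.
  rewrite /Bh; lra.
have hJ2 : Bh < rm * l0 ^+ J2.
  have Bh0 : 0 <= Bh / rm by apply: divr_ge0; [rewrite /Bh; lra | exact: ltW].
  have := archi_boundP Bh0; rewrite -/J2 => h.
  have := lt_le_trans h (natr_le_pow J2).
  by rewrite ltr_pdivrMr // mulrC.
set Rtop := radf T + N gam.
have [kk [a hp]] := omfin _ (finM Rtop).
case: hp => tau [M' [gt hM]].
have per : forall x, om (mul gam x) = om x.
  move=> x; have := congr1 (fun f => f (mul gam x)) hper.
  by rewrite /ptrans /ginv gmulKx.
have Qeq : forall x, Gam c x -> N x < Rtop -> iter kk S (Pa a) (mul (- tau) x) = om x.
  move=> x gx Nx; have := congr1 (fun f => f x) hM.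
  rewrite /prestr /ptrans /ginv.
  case: asboolP => [_|]; last by case; split.
  case: asboolP => // _ h; exfalso; apply: (proj2 (omsupp x) gx); by rewrite h.
set d0 := mul (- tau) (mul gam tau).
have cf0 : Config (iter kk S (Pa a)) (- tau) d0 (radf T).
  move=> z gz; rewrite opprK => hz.
  have gx : Gam c (mul tau z) by apply: gamM.
  have Nx : N (mul tau z) < Rtop by rewrite /Rtop; lra.
  have := Qeq _ gx Nx; rewrite gmulKx // => ->.
  split; first by apply/omsupp.
  have gx2 : Gam c (mul gam (mul tau z)) by apply: gamM.
  have Nx2 : N (mul gam (mul tau z)) < Rtop.
    have := Nsub gam (mul tau z); rewrite /Rtop; lra.
  have := Qeq _ gx2 Nx2; rewrite per.
  by rewrite /d0 !gmulA // gmulKx // !gmulA.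
have gd0 : Gam c d0 by apply: gamVMg => //; apply: gamM.
have h0 : mul (- - tau) (mul d0 (- tau)) = gam.
  by rewrite opprK /d0 !gmulA // gmulKVx // gmulxV // gmulx0.
have pr0 : Props gam (mul (- - tau) (mul d0 (- tau))) 0 J1 Bh.
  rewrite h0; split => //.
  - by move=> k _; rewrite expr0 mulr1.
  - rewrite /Bh; lra.
  - move=> _; rewrite expr0 mulr1 /Bh; lra.
have it := iterate hJ1 hBh (gamV gt) gd0 cf0 pr0.
have [leT|ltT] := leqP kk T.
  have [u [d [gu gd cf [_ hn0 _ _ _]]]] := it kk 0%N (add0n _) leT.
  have hr : 0 < radf (T - kk) by apply: lt_le_trans (radf_ge _); lra.
  have Nu : N (mul (- u) u) < radf (T - kk) by rewrite gmulVx // Nz.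
  have [Pu Pdu] := cf u gu Nu.
  move: Pu Pdu; rewrite /= /Pa; case: eqP => // u0 _.
  case: eqP => // du0 _; apply: hn0; by rewrite du0 gmulx0 u0 oppr0.
have [u [d [gu gd cf [gh hn0 _ _ hJ]]]] := it T (kk - T)%N (subnK (ltnW ltT)) (leqnn T).
have := hJ (leq_addr _ _); rewrite /T addKn => h.
apply: hn0; apply: gamV0 => //.
have lp : 0 < l0 ^+ J2 by apply: exprn_gt0.
by rewrite -(ltr_pM2r lp); apply: le_lt_trans h hJ2.
Qed.

End Subst.

Unset Implicit Arguments.
Theorem theorem1p4 (R : realType) (n : nat)
  (c : 'I_n -> 'I_n -> 'I_n -> int) (w : 'I_n -> nat)
  (N : 'rV[R]_n -> R) (V : set 'rV[R]_n)
  (A : finType) (l0 : R) (S0 : A -> 'rV[R]_n -> option A) :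
  canonical_2step_adapted c w ->
  homog_norm c w N ->
  datum_domain c N V ->
  homogeneous_datum c w V ->
  subst_datum c w N V l0 S0 ->
  non_periodic c w V l0 S0 ->
  primitive c w V l0 S0 ->
  strongly_aperiodic c (Omega c w V l0 S0).
Proof.
move=> hcan hN hdd _ hsd [S0inj nonper] _.
have hw2 := canon_w hcan.
case: (hcan) => hc [i00 [j00 [k00 _]]] hc2 w12 _.
have hw : forall i j k, c i j k != 0 -> w k = (w i + w j)%N.
  by move=> i j k /hw2 [-> -> ->].
case: (hdd) => _ _ _ Vtile.
case: (hsd) => [[rm [rp [rm0 rmp Vin Vout l0big]]]] Dgam S0supp.
case: (hN) => N0 Ninv Ndil Nsub Ncont.
have Nge : forall x, 0 <= N x.
  move=> x; have := Nsub x (ginv x); rewrite /ginv gmulxV // => h.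
  have e : N 0 = 0 by apply/N0.
  rewrite e Ninv in h; lra.
have finM : forall r : R, finite_set [set x : 'rV[R]_n | Gam c x /\ N x < r].
  move=> r.
  have [K hK] := coord_bound i00 w12 Ncont (fun x => (N0 x).1) Ndil Nge r.
  apply: sub_finite_set (finite_intball hK) => x [gx Nx]; split => //.
  exact: (gam_int hc2 gx).
move=> om hom g gg hg.
exact: (strong hc hw hc2 hN Vtile rm0 rmp Vin Vout l0big Dgam S0supp hw2 finM S0inj nonper hom gg hg).
Qed.
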